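(* Let $\mathscr F$ be a class of functions $\Omega\to[0,1]$, $\varepsilon>0$ and $d\in\mathbb N$. The following are equivalent: (1) $\mathrm{fat}_\varepsilon(\mathscr F\,\mathrm{mod}\,\omega_1)\le d$; (2) for every countable subclass $\mathscr F'\subseteq\mathscr F$ there is a countable set $N\subseteq\Omega$ (depending on $\mathscr F'$) such that $\mathrm{fat}_\varepsilon(\mathscr F'\restriction(\Omega\setminus N))\le d$.
   Context: A finite $A\subseteq X$ is $\varepsilon$-fat shattered by $\mathscr F$ if there is $h:A\to[0,1]$ such that for every $B\subseteq A$ some $f_B\in\mathscr F$ has $f_B(a)>h(a)+\varepsilon$ for $a\in B$ and $f_B(a)<h(a)-\varepsilon$ for $a\in A\setminus B$; $\mathrm{fat}_\varepsilon(\mathscr F\restriction X)$ is the supremum of sizes of such $A\subseteq X$. $\mathrm{fat}_\varepsilon(\mathscr F\,\mathrm{mod}\,\omega_1)$ is the supremum of $n$ for which there exist uncountable $A_1,\dots,A_n\subseteq\Omega$ and $h:\{1,\dots,n\}\to[0,1]$ such that for every $J\subseteq\{1,\dots,n\}$ there is $f_J\in\mathscr F$ with $f_J(x)>h(i)+\varepsilon$ whenever $i\in J$, $x\in A_i$, and $f_J(x)<h(i)-\varepsilon$ whenever $i\notin J$, $x\in A_i$. *)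

(* Defs.v *)
From Stdlib Require Import Reals List.
Open Scope R_scope.

Definition countable {T : Type} (P : T -> Prop) : Prop :=
  exists g : nat -> option T, forall x, P x -> exists n, g n = Some x.

Definition fat_shattered {Omega : Type} (F : (Omega -> R) -> Prop)
    (eps : R) (A : list Omega) : Prop :=
  exists h : Omega -> R,
    (forall a, In a A -> 0 <= h a <= 1) /\
    forall B : Omega -> Prop,
      exists f, F f /\
        forall a, In a A ->
          (B a -> f a > h a + eps) /\ (~ B a -> f a < h a - eps).

Definition fat_restr_le {Omega : Type} (F : (Omega -> R) -> Prop)
    (X : Omega -> Prop) (eps : R) (d : nat) : Prop :=
  forall A : list Omega, NoDup A -> (forall a, In a A -> X a) ->
    fat_shattered F eps A -> (length A <= d)%nat.

Definition fat_mod_w1_witness {Omega : Type} (F : (Omega -> R) -> Prop)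
    (eps : R) (n : nat) : Prop :=
  exists (A : nat -> Omega -> Prop) (h : nat -> R),
    (forall i, (i < n)%nat -> ~ countable (A i)) /\
    (forall i, (i < n)%nat -> 0 <= h i <= 1) /\
    forall J : nat -> Prop,
      exists f, F f /\
        forall i, (i < n)%nat -> forall x, A i x ->
          (J i -> f x > h i + eps) /\ (~ J i -> f x < h i - eps).

Definition fat_mod_w1_le {Omega : Type} (F : (Omega -> R) -> Prop)
    (eps : R) (d : nat) : Prop :=
  forall n, fat_mod_w1_witness F eps n -> (n <= d)%nat.

(* Main.v *)
Require Import Defs.
From Stdlib Require Import Reals List Lra Lia Arith ZArith Cantor Classical ClassicalEpsilon.
Open Scope R_scope.

Lemma bits_exist (n : nat) (P : nat -> Prop) :
  exists m, forall i, (i < n)%nat -> (Nat.testbit m i = true <-> P i).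
Proof.
  induction n as [|n [m Hm]].
  - exists 0%nat; intros; lia.
  - destruct (classic (P n)) as [Hp|Hp].
    + exists (Nat.setbit m n); intros i Hi.
      destruct (Nat.eq_dec i n) as [->|Hne].
      * rewrite Nat.setbit_eq; tauto.
      * rewrite Nat.setbit_neq by lia. apply Hm; lia.
    + exists (Nat.clearbit m n); intros i Hi.
      destruct (Nat.eq_dec i n) as [->|Hne].
      * rewrite Nat.clearbit_eq; split; [discriminate|tauto].
      * rewrite Nat.clearbit_neq by lia. apply Hm; lia.
Qed.

Lemma bits_exist_bnd (n : nat) (P : nat -> Prop) :
  exists m, (m < 2 ^ n)%nat /\ forall i, (i < n)%nat -> (Nat.testbit m i = true <-> P i).
Proof.
  destruct (bits_exist n P) as [m Hm].
  exists (m mod 2 ^ n)%nat; split.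
  - apply Nat.mod_upper_bound, Nat.pow_nonzero; lia.
  - intros i Hi. rewrite Nat.mod_pow2_bits_low by exact Hi. auto.
Qed.

Lemma fin_max (M : nat) (P : nat -> Prop) (g : nat -> R) (c : R) :
  (forall m, (m < M)%nat -> P m -> g m < c) ->
  exists c', c' < c /\ forall m, (m < M)%nat -> P m -> g m <= c'.
Proof.
  induction M as [|M IH]; intros H.
  - exists (c - 1); split; [lra|intros; lia].
  - destruct IH as [c' [Hc Hm]]. { intros; apply H; auto; lia. }
    destruct (classic (P M)) as [Hp|Hp].
    + exists (Rmax c' (g M)); split.
      * apply Rmax_lub_lt; auto.
      * intros m Hm' Pm. destruct (Nat.eq_dec m M) as [->|Hne].
        -- apply Rmax_r.
        -- eapply Rle_trans; [apply Hm; auto; lia|apply Rmax_l].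
    + exists c'; split; auto. intros m Hm' Pm.
      destruct (Nat.eq_dec m M) as [->|Hne]; [tauto|apply Hm; auto; lia].
Qed.

Definition q_of (j : nat) : R :=
  let (p, r) := Cantor.of_nat j in INR p / INR (S r).

Lemma q_of_nonneg j : 0 <= q_of j.
Proof.
  unfold q_of; destruct (Cantor.of_nat j) as [p r].
  apply Rmult_le_pos; [apply pos_INR|]. left; apply Rinv_0_lt_compat, lt_0_INR; lia.
Qed.

Lemma rat_approx (h d : R) : 0 <= h -> 0 < d -> exists j, h - d < q_of j <= h.
Proof.
  intros Hh Hd.
  destruct (archimed (/ d)) as [Ha _].
  set (r := Z.to_nat (up (/ d))).
  assert (HrR : / d < INR (S r)).
  { rewrite S_INR. unfold r. destruct (Z_le_gt_dec 0 (up (/d))) as [Hz|Hz].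
    - rewrite INR_IZR_INZ, Z2Nat.id by exact Hz. lra.
    - assert (IZR (up (/d)) <= -1) by (apply IZR_le; lia).
      assert (0 < / d) by (apply Rinv_0_lt_compat; auto). lra. }
  set (M := INR (S r)).
  assert (HM : 0 < M) by (apply lt_0_INR; lia).
  destruct (archimed (h * M)) as [Hu1 Hu2].
  set (z := (up (h * M) - 1)%Z).
  assert (Hz0 : (0 <= z)%Z).
  { assert (0 <= h * M) by (apply Rmult_le_pos; lra).
    assert (-1 < IZR z) by (unfold z; rewrite minus_IZR; lra).
    assert (Hl : IZR (-1) < IZR z) by (simpl; lra). apply lt_IZR in Hl. lia. }
  exists (Cantor.to_nat (Z.to_nat z, r)).
  unfold q_of. rewrite Cantor.cancel_of_to. fold M.
  rewrite INR_IZR_INZ, Z2Nat.id by exact Hz0.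
  assert (Hzv : IZR z = IZR (up (h * M)) - 1) by (unfold z; rewrite minus_IZR; reflexivity).
  assert (HMd : / M < d).
  { rewrite <- (Rinv_inv d). apply Rinv_lt_contravar; auto.
    apply Rmult_lt_0_compat; auto. apply Rinv_0_lt_compat; auto. }
  split.
  - apply (Rmult_lt_reg_r M); auto. unfold Rdiv; rewrite Rmult_assoc, Rinv_l by lra.
    rewrite Rmult_1_r. rewrite Rmult_minus_distr_r.
    assert (d * M > 1).
    { apply (Rmult_lt_reg_r (/ M)). apply Rinv_0_lt_compat; auto.
      rewrite Rmult_assoc, Rinv_r by lra. lra. }
    lra.
  - apply (Rmult_le_reg_r M); auto. unfold Rdiv; rewrite Rmult_assoc, Rinv_l by lra. lra.
Qed.
Fixpoint dec_len (L n : nat) : list nat :=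
  match L with
  | O => nil
  | S L' => let (a, b) := Cantor.of_nat n in a :: dec_len L' b
  end.

Definition dec_list (n : nat) : list nat :=
  let (L, r) := Cantor.of_nat n in dec_len L r.

Lemma dec_list_surj (l : list nat) : exists n, dec_list n = l.
Proof.
  assert (H : exists r, dec_len (length l) r = l).
  { induction l as [|a l [r Hr]].
    - exists 0%nat; reflexivity.
    - exists (Cantor.to_nat (a, r)). cbn -[Cantor.of_nat Cantor.to_nat]. rewrite Cantor.cancel_of_to, Hr. reflexivity. }
  destruct H as [r Hr]. exists (Cantor.to_nat (length l, r)).
  unfold dec_list. rewrite Cantor.cancel_of_to. exact Hr.
Qed.

Lemma countable_avoid {Omega : Type} (A N : Omega -> Prop) (L : list Omega) :
  ~ countable A -> countable N -> exists x, A x /\ ~ N x /\ ~ In x L.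
Proof.
  intros HA [g Hg]. apply NNPP; intro Hno. apply HA.
  exists (fun n => if Nat.ltb n (length L) then nth_error L n else g (n - length L)%nat).
  intros x Ax. destruct (classic (In x L)) as [Hin|Hnin].
  - destruct (In_nth_error _ _ Hin) as [n Hn]. exists n.
    assert (Hlt : (n < length L)%nat) by (apply nth_error_Some; congruence).
    apply Nat.ltb_lt in Hlt. rewrite Hlt. exact Hn.
  - destruct (classic (N x)) as [Nx|Nx].
    + destruct (Hg x Nx) as [n Hn]. exists (n + length L)%nat.
      destruct (Nat.ltb_spec (n + length L) (length L)); [lia|].
      replace (n + length L - length L)%nat with n by lia. exact Hn.
    + exfalso; apply Hno; eauto.
Qed.

Lemma build_points {Omega : Type} (A : nat -> Omega -> Prop) (N : Omega -> Prop) (n : nat) :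
  (forall i, (i < n)%nat -> ~ countable (A i)) -> countable N ->
  exists L : list Omega, length L = n /\ NoDup L /\
    forall i, (i < n)%nat -> exists x, nth_error L i = Some x /\ A i x /\ ~ N x.
Proof.
  intros HA HN. induction n as [|n IH].
  - exists nil; repeat split; [constructor|intros; lia].
  - destruct IH as [L [HL [HD HP]]]. { intros; apply HA; lia. }
    destruct (countable_avoid (A n) N L) as [x [Ax [Nx Ix]]]; auto.
    exists (L ++ x :: nil). split; [rewrite length_app; simpl; lia|split].
    + apply NoDup_app; auto. { repeat constructor; auto. }
      intros y Hy Hy'. destruct Hy' as [<-|[]]. auto.
    + intros i Hi. destruct (Nat.eq_dec i n) as [->|Hne].
      * exists x. rewrite nth_error_app2 by lia. rewrite HL, Nat.sub_diag. auto.
      * destruct (HP i ltac:(lia)) as [y [Hy1 Hy2]]. exists y.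
        rewrite nth_error_app1 by lia. auto.
Qed.
Lemma dir21 (Omega : Type) (F : (Omega -> R) -> Prop) (eps : R) (d : nat) :
  (forall F' : (Omega -> R) -> Prop,
     (forall f, F' f -> F f) -> countable F' ->
     exists N : Omega -> Prop, countable N /\
       fat_restr_le F' (fun x => ~ N x) eps d) ->
  fat_mod_w1_le F eps d.
Proof.
  intros H2 n [A [h [HA [Hh HJ]]]].
  pose (fJ := fun J => proj1_sig (constructive_indefinite_description _ (HJ J))).
  assert (HfJ : forall J, F (fJ J) /\ forall i, (i < n)%nat -> forall x, A i x ->
      (J i -> fJ J x > h i + eps) /\ (~ J i -> fJ J x < h i - eps)).
  { intro J. exact (proj2_sig (constructive_indefinite_description _ (HJ J))). }
  pose (F' := fun f => exists m, f = fJ (fun i => Nat.testbit m i = true)).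
  destruct (H2 F') as [N [HN Hfat]].
  - intros f [m ->]. apply HfJ.
  - exists (fun m => Some (fJ (fun i => Nat.testbit m i = true))).
    intros f [m ->]. eauto.
  - destruct (build_points A N n HA HN) as [L [HL [HD HP]]].
    rewrite <- HL. apply Hfat; auto.
    + intros a Ha. destruct (In_nth_error _ _ Ha) as [i Hi].
      assert (Hlt : (i < n)%nat) by (rewrite <- HL; apply nth_error_Some; congruence).
      destruct (HP i Hlt) as [x [Hx1 [_ Hx3]]]. congruence.
    + pose (idx := fun x => epsilon (inhabits 0%nat) (fun i => nth_error L i = Some x)).
      assert (Hidx : forall i x, (i < n)%nat -> nth_error L i = Some x -> idx x = i).
      { intros i x Hi Hx. assert (Hs : nth_error L (idx x) = Some x).
        { apply epsilon_spec; eauto. }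
        symmetry. apply (proj1 (NoDup_nth_error L) HD); [lia|congruence]. }
      assert (Hpt : forall a, In a L -> exists i, (i < n)%nat /\ nth_error L i = Some a /\ A i a).
      { intros a Ha. destruct (In_nth_error _ _ Ha) as [i Hi].
        assert (Hlt : (i < n)%nat) by (rewrite <- HL; apply nth_error_Some; congruence).
        destruct (HP i Hlt) as [x [Hx1 [Hx2 _]]]. exists i. repeat split; congruence. }
      exists (fun x => h (idx x)). split.
      * intros a Ha. destruct (Hpt a Ha) as [i [Hi [Hn _]]]. rewrite (Hidx i a Hi Hn). auto.
      * intros B.
        destruct (bits_exist n (fun i => exists x, nth_error L i = Some x /\ B x)) as [m Hm].
        exists (fJ (fun i => Nat.testbit m i = true)). split; [exists m; reflexivity|].
        intros a Ha. destruct (Hpt a Ha) as [i [Hi [Hn Ai]]].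
        rewrite (Hidx i a Hi Hn).
        destruct (proj2 (HfJ (fun i => Nat.testbit m i = true)) i Hi a Ai) as [H1 H2'].
        split; intro HB.
        -- apply H1. apply Hm; eauto.
        -- apply H2'. intro Ht. apply (proj1 (Hm i Hi)) in Ht.
           destruct Ht as [x [Hx Bx]]. apply HB. congruence.
Qed.
Definition valf {Omega : Type} (gF : nat -> option (Omega -> R)) (n : nat) : Omega -> R :=
  match gF n with Some f => f | None => fun _ => 0 end.

Definition Cset {Omega : Type} (F' : (Omega -> R) -> Prop) (gF : nat -> option (Omega -> R))
  (eps : R) (lst : list nat) (x : Omega) : Prop :=
  match lst with
  | k :: i :: j :: l => forall m, (m < 2 ^ k)%nat ->
      F' (valf gF (nth m l 0%nat)) /\
      (Nat.testbit m i = true -> valf gF (nth m l 0%nat) x > q_of j + eps) /\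
      (Nat.testbit m i = false -> valf gF (nth m l 0%nat) x < q_of j - eps)
  | _ => False
  end.

Lemma dir12 (Omega : Type) (F : (Omega -> R) -> Prop) (eps : R) (d : nat) :
  fat_mod_w1_le F eps d ->
  (forall F' : (Omega -> R) -> Prop,
     (forall f, F' f -> F f) -> countable F' ->
     exists N : Omega -> Prop, countable N /\
       fat_restr_le F' (fun x => ~ N x) eps d).
Proof.
  intros H1 F' HF' [gF HgF].
  pose (C := Cset F' gF eps).
  pose (G := fun lst => epsilon (inhabits (fun _ : nat => @None Omega))
                 (fun g => forall x, C lst x -> exists n, g n = Some x)).
  exists (fun x => exists lst, countable (C lst) /\ C lst x). split.
  { exists (fun n => let (a, b) := Cantor.of_nat n in G (dec_list a) b).
    intros x [lst [Hc Hx]].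
    destruct (dec_list_surj lst) as [a Ha].
    assert (HG : forall x, C lst x -> exists n, G lst n = Some x) by (apply epsilon_spec; exact Hc).
    destruct (HG x Hx) as [b Hb]. exists (Cantor.to_nat (a, b)).
    rewrite Cantor.cancel_of_to, Ha. exact Hb. }
  intros A HD HN [h [Hh Hsh]].
  set (k := length A).
  pose (Bm := fun m x => exists i, (i < k)%nat /\ nth_error A i = Some x /\ Nat.testbit m i = true).
  assert (Hc : forall m, exists c, F' (valf gF c) /\ forall a, In a A ->
     (Bm m a -> valf gF c a > h a + eps) /\ (~ Bm m a -> valf gF c a < h a - eps)).
  { intro m. destruct (Hsh (Bm m)) as [f [Ff Hf]]. destruct (HgF f Ff) as [c Hc].
    exists c. unfold valf; rewrite Hc. auto. }
  pose (c := fun m => proj1_sig (constructive_indefinite_description _ (Hc m))).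
  assert (Hcs : forall m, F' (valf gF (c m)) /\ forall a, In a A ->
     (Bm m a -> valf gF (c m) a > h a + eps) /\ (~ Bm m a -> valf gF (c m) a < h a - eps)).
  { intro m. exact (proj2_sig (constructive_indefinite_description _ (Hc m))). }
  pose (l := map c (seq 0 (2 ^ k))).
  assert (Hl : forall m, (m < 2 ^ k)%nat -> nth m l 0%nat = c m).
  { intros m Hm. unfold l. rewrite (nth_indep _ 0%nat (c 0%nat)) by (rewrite length_map, length_seq; exact Hm).
    rewrite map_nth, seq_nth by exact Hm. reflexivity. }
  assert (HB : forall i x m, (i < k)%nat -> nth_error A i = Some x ->
             (Bm m x <-> Nat.testbit m i = true)).
  { intros i x m Hi Hx. split.
    - intros [i' [Hi' [Hx' Ht]]].
      assert (i' = i) by (apply (proj1 (NoDup_nth_error A) HD); [exact Hi'|congruence]).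
      subst; exact Ht.
    - intro Ht; exists i; auto. }
  assert (Hj : forall i, exists j, (i < k)%nat -> forall x, nth_error A i = Some x ->
             q_of j <= h x /\ C (k :: i :: j :: l) x).
  { intro i. destruct (lt_dec i k) as [Hi|Hi]; [|exists 0%nat; intros; lia].
    destruct (nth_error A i) as [x|] eqn:Hx;
      [|exfalso; apply (proj2 (nth_error_Some A i)) in Hi; auto].
    assert (Hin : In x A) by (eapply nth_error_In; eauto).
    destruct (fin_max (2 ^ k) (fun m => Nat.testbit m i = false)
               (fun m => valf gF (c m) x) (h x - eps)) as [c' [Hc' Hm']].
    { intros m Hm Hb. apply (proj2 (Hcs m) x Hin). rewrite (HB i x m Hi Hx). congruence. }
    destruct (Hh x Hin) as [Hh0 Hh1].
    destruct (rat_approx (h x) (h x - eps - c') Hh0 ltac:(lra)) as [j [Hj1 Hj2]].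
    exists j. intros _ y Hy. assert (y = x) by congruence. subst y. split; auto.
    simpl. intros m Hm. rewrite (Hl m Hm). split; [apply Hcs|split].
    - intro Ht. assert (valf gF (c m) x > h x + eps).
      { apply (proj2 (Hcs m) x Hin). apply (HB i x m Hi Hx). exact Ht. }
      lra.
    - intro Ht. specialize (Hm' m Hm Ht). simpl in Hm'. lra. }
  pose (jf := fun i => proj1_sig (constructive_indefinite_description _ (Hj i))).
  assert (Hjf : forall i, (i < k)%nat -> forall x, nth_error A i = Some x ->
             q_of (jf i) <= h x /\ C (k :: i :: jf i :: l) x).
  { intro i. exact (proj2_sig (constructive_indefinite_description _ (Hj i))). }
  apply H1. exists (fun i => C (k :: i :: jf i :: l)), (fun i => q_of (jf i)).
  split; [|split].
  - intros i Hi Hcnt.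
    destruct (nth_error A i) as [x|] eqn:Hx;
      [|apply (proj2 (nth_error_Some A i)) in Hi; auto].
    apply (HN x); [eapply nth_error_In; eauto|].
    exists (k :: i :: jf i :: l). split; auto. apply (Hjf i Hi x Hx).
  - intros i Hi. split; [apply q_of_nonneg|].
    destruct (nth_error A i) as [x|] eqn:Hx;
      [|exfalso; apply (proj2 (nth_error_Some A i)) in Hi; auto].
    destruct (Hjf i Hi x Hx) as [Hq _].
    destruct (Hh x ltac:(eapply nth_error_In; eauto)). lra.
  - intro J. destruct (bits_exist_bnd k J) as [m [Hmk Hm]].
    exists (valf gF (c m)). split; [apply HF', Hcs|].
    intros i Hi x Hx. simpl in Hx. destruct (Hx m Hmk) as [_ [Ht Hf]].
    rewrite (Hl m Hmk) in Ht, Hf. split; intro HJ.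
    + apply Ht, Hm; auto.
    + apply Hf. destruct (Nat.testbit m i) eqn:E; auto.
      exfalso; apply HJ, Hm; auto.
Qed.

Theorem mainTheorem18 (Omega : Type) (F : (Omega -> R) -> Prop)
  (HF : forall f, F f -> forall x, 0 <= f x <= 1)
  (eps : R) (Heps : 0 < eps) (d : nat) :
  fat_mod_w1_le F eps d <->
  (forall F' : (Omega -> R) -> Prop,
     (forall f, F' f -> F f) -> countable F' ->
     exists N : Omega -> Prop, countable N /\
       fat_restr_le F' (fun x => ~ N x) eps d).
Proof.
  split; [apply dir12|apply dir21].
Qed.
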